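(* For every integer $k\ge 2$, $$\sum_{n\geq 0}C_{\Pi_{n,k}}(x)\,t^{n}=\frac{1}{1-\bigl(k+(k-1)x\bigr)t-(1+x)t^{2}}.$$
   Context: For an integer $k\ge 2$, a $k$-Pell string is a finite word over the alphabet $\{0,1,\ldots,k-1,kk\}$, i.e. a word over $\{0,1,\ldots,k\}$ in which every maximal run of the letter $k$ has even length. For $n\ge 0$, the $k$-Pell graph $\Pi_{n,k}$ has as vertices all $k$-Pell strings of length $n$, and two vertices are adjacent if one is obtained from the other either by replacing a single letter $i$ by $i+1$ (or vice versa) for some $i\in\{0,1,\ldots,k-2\}$, or by replacing one factor $(k-1)(k-1)$ by $kk$ (or vice versa), in such a way that the resulting string is again a $k$-Pell string. The cube polynomial of a graph $G$ is $C_G(x)=\sum_{i\ge 0}c_i(G)x^i$, where $c_i(G)$ is the number of induced subgraphs of $G$ isomorphic to the hypercube $Q_i$. *)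

(* Defs.v *)
From mathcomp Require Import all_boot all_order all_algebra.
Set Implicit Arguments. Unset Strict Implicit. Unset Printing Implicit Defensive.
Import GRing.Theory.
Local Open Scope ring_scope.

(* A k-Pell string: a word over {0,...,k} that is a word over the alphabet
   {0,...,k-1, kk}, i.e. every letter k is (greedily) paired with a following k.
   This is equivalent to: every maximal run of k has even length. *)
Fixpoint pellb (k : nat) (s : seq nat) : bool :=
  match s with
  | [::] => true
  | a :: s' =>
      if a == k then
        match s' with
        | [::] => false
        | b :: s'' => (b == k) && pellb k s''
        end
      else pellb k s'
  end.

Definition word (n k : nat) := (n.-tuple 'I_k.+1)%type.

Definition wseq n k (w : word n k) : seq nat := map (@nat_of_ord _) w.

Definition is_pell n k (w : word n k) : bool := pellb k (wseq w).

(* adjacency of the k-Pell graph on words (seq nat) of equal length: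
   (1) replace one letter i by i+1 (or back), i in {0,...,k-2};
   (2) replace one factor (k-1)(k-1) by kk (or back). *)
Definition pell_adj (k : nat) (u v : seq nat) : bool :=
  let n := size u in
  (size u == size v) &&
  (has (fun j =>
      [&& all (fun l => (l == j) || (nth 0%N u l == nth 0%N v l)) (iota 0 n),
          ((nth 0%N u j).+1 == nth 0%N v j) || ((nth 0%N v j).+1 == nth 0%N u j)
        & (maxn (nth 0%N u j) (nth 0%N v j) <= k.-1)%N]) (iota 0 n)
   ||
   has (fun j =>
      [&& (j.+1 < n)%N,
          all (fun l => [|| l == j, l == j.+1 | nth 0%N u l == nth 0%N v l]) (iota 0 n)
        & [&& nth 0%N u j == k.-1, nth 0%N u j.+1 == k.-1,
              nth 0%N v j == k & nth 0%N v j.+1 == k]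
          || [&& nth 0%N v j == k.-1, nth 0%N v j.+1 == k.-1,
              nth 0%N u j == k & nth 0%N u j.+1 == k]]) (iota 0 n)).

Definition pi_adj n k (u v : word n k) : bool := pell_adj k (wseq u) (wseq v).

Definition cube (i : nat) := {ffun 'I_i -> bool}.
Definition cube_adj i (a b : cube i) : bool := #|[set j | a j != b j]| == 1%N.

Definition cube_count (n k i : nat) : nat :=
  #|[set S : {set word n k} |
      [forall w in S, is_pell w] &&
      [exists f : {ffun cube i -> word n k},
         [&& injectiveb f, f @: setT == S &
             [forall a, forall b, pi_adj (f a) (f b) == cube_adj a b]]]]|.

(* cube polynomial C_{Pi_{n,k}}(x) in Z[x]; c_i = 0 for i >= #|word n k| + 1
   (since Q_i has 2^i > i vertices), so the truncated sum is the full sum. *)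
Definition cube_poly (n k : nat) : {poly int} :=
  \sum_(i < #|{: word n k}|.+1) (cube_count n k i)%:R *: 'X^i.

(* coefficients (in t) of the denominator 1 - (k + (k-1)x) t - (1 + x) t^2 *)
Definition pell_denom (k j : nat) : {poly int} :=
  if j == 0%N then 1
  else if j == 1%N then - (k%:R + (k.-1)%:R *: 'X)
  else if j == 2%N then - (1 + 'X)
  else 0.

(* Main.v *)
Require Import Defs.
From mathcomp Require Import all_boot all_order all_algebra zify ring.
Set Implicit Arguments. Unset Strict Implicit. Unset Printing Implicit Defensive.

Section Adj.
Variable k : nat.

Fixpoint padj (u v : seq nat) : bool :=
  match u, v with
  | x :: u', y :: v' =>
    [|| (x == y) && padj u' v',
        [&& (x.+1 == y) || (y.+1 == x), maxn x y <= k.-1 & u' == v'] |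
        match u', v' with
        | x2 :: u'', y2 :: v'' =>
           ([&& x == k.-1, x2 == k.-1, y == k & y2 == k]
            || [&& y == k.-1, y2 == k.-1, x == k & x2 == k]) && (u'' == v'')
        | _, _ => false
        end]
  | _, _ => false
  end.

Lemma iota1 n : iota 1 n = map succn (iota 0 n).
Proof. by rewrite (iotaDl 1 0); apply: eq_map => l; rewrite add1n. Qed.

Lemma all_nth_eq (u v : seq nat) : size u = size v ->
  all (fun l => nth 0 u l == nth 0 v l) (iota 0 (size u)) = (u == v).
Proof.
elim: u v => [|x u IH] [|y v] //= [/IH E].
by rewrite eqseq_cons -E iota1 all_map.
Qed.


Definition T1 (n : nat) (u v : seq nat) (j : nat) :=
  [&& all (fun l => (l == j) || (nth 0%N u l == nth 0%N v l)) (iota 0 n),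
      ((nth 0%N u j).+1 == nth 0%N v j) || ((nth 0%N v j).+1 == nth 0%N u j)
    & (maxn (nth 0%N u j) (nth 0%N v j) <= k.-1)%N].
Definition T2 (n : nat) (u v : seq nat) (j : nat) :=
  [&& (j.+1 < n)%N,
      all (fun l => [|| l == j, l == j.+1 | nth 0%N u l == nth 0%N v l]) (iota 0 n)
    & [&& nth 0%N u j == k.-1, nth 0%N u j.+1 == k.-1,
          nth 0%N v j == k & nth 0%N v j.+1 == k]
      || [&& nth 0%N v j == k.-1, nth 0%N v j.+1 == k.-1,
          nth 0%N u j == k & nth 0%N u j.+1 == k]].

Lemma pell_adjE u v : pell_adj k u v =
  (size u == size v) && (has (T1 (size u) u v) (iota 0 (size u)) || has (T2 (size u) u v) (iota 0 (size u))).
Proof. by []. Qed.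

Lemma T1S n x y u v j : T1 n.+1 (x::u) (y::v) j.+1 = (x == y) && T1 n u v j.
Proof.
by rewrite /T1 /= iota1 all_map /=; case: (x == y).
Qed.

Lemma T2S n x y u v j : T2 n.+1 (x::u) (y::v) j.+1 = (x == y) && T2 n u v j.
Proof.
by rewrite /T2 /= iota1 all_map /= !ltnS; case: (x == y); rewrite /= ?andbF.
Qed.

Lemma T10 x y u v : size u = size v ->
  T1 (size u).+1 (x::u) (y::v) 0 = [&& (x.+1 == y) || (y.+1 == x), maxn x y <= k.-1 & u == v].
Proof.
move=> Es; rewrite /T1 /= iota1 all_map /=.
have -> : all (preim succn (fun l => (l == 0) || (nth 0 (x :: u) l == nth 0 (y :: v) l))) (iota 0 (size u)) = (u == v).
  by rewrite -all_nth_eq.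
by case: (u == v); rewrite ?andbT ?andbF.
Qed.

Lemma T20 x y u v : size u = size v ->
  T2 (size u).+1 (x::u) (y::v) 0 =
        match u, v with
        | x2 :: u'', y2 :: v'' =>
           ([&& x == k.-1, x2 == k.-1, y == k & y2 == k]
            || [&& y == k.-1, y2 == k.-1, x == k & x2 == k]) && (u'' == v'')
        | _, _ => false
        end.
Proof.
case: u v => [|x2 u] [|y2 v] //= [Es].
rewrite /T2 /= (iotaDl 2 0) all_map.
have -> : all (preim (addn 2) (fun l => [|| l == 0, l == 1 | nth 0 [:: x, x2 & u] l == nth 0 [:: y, y2 & v] l])) (iota 0 (size u)) = (u == v).
  by rewrite -all_nth_eq //; apply: eq_all => l /=; rewrite add2n.
by case: (u == v); rewrite ?andbT ?andbF.
Qed.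

Lemma pell_adj_cons x y u v : size u = size v ->
  pell_adj k (x :: u) (y :: v) =
    [|| (x == y) && pell_adj k u v,
        [&& (x.+1 == y) || (y.+1 == x), maxn x y <= k.-1 & u == v] |
        match u, v with
        | x2 :: u'', y2 :: v'' =>
           ([&& x == k.-1, x2 == k.-1, y == k & y2 == k]
            || [&& y == k.-1, y2 == k.-1, x == k & x2 == k]) && (u'' == v'')
        | _, _ => false
        end].
Proof.
move=> Es; rewrite !pell_adjE /= Es eqxx /= -Es iota1 !has_map.
rewrite (eq_has (a2 := fun j => (x == y) && T1 (size u) u v j)); last by move=> j /=; rewrite T1S.
rewrite [has (preim succn (T2 _ _ _)) _](eq_has (a2 := fun j => (x == y) && T2 (size u) u v j)); last by move=> j /=; rewrite T2S.
rewrite T10 // T20 //.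
have H (p : pred nat) s : has (fun j => (x == y) && p j) s = (x == y) && has p s.
  by case: (x == y) => //=; apply/hasP => -[].
rewrite !H.
rewrite eqxx /=.
by case: (x == y); case: [&& _, _ & _]; case: (has _ _); case: (has _ _); case: (match u with [::] => _ | _ :: _ => _ end).
Qed.

Lemma pell_adj_padj u v : size u = size v -> pell_adj k u v = padj u v.
Proof.
elim: u v => [|x u IH] [|y v] //= [Es].
by rewrite pell_adj_cons // IH.
Qed.

End Adj.

Section Adj2.
Variable k : nat.
Hypothesis hk : 1 < k.

Lemma padj_sym u v : padj k u v = padj k v u.
Proof.
elim: u v => [|x u IH] [|y v] //=.
rewrite IH eq_sym (eq_sym u) maxnC (orbC (x.+1 == y)).
case: u v {IH} => [|x2 u] [|y2 v] //=.
rewrite (eq_sym u); congr [|| _, _ | _].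
by rewrite orbC.
Qed.

Lemma padj_same a u v : padj k (a :: u) (a :: v) = padj k u v.
Proof.
rewrite /= eqxx /=.
have -> : (a.+1 == a) = false by elim: a.
rewrite /=.
case: u v => [|x2 u] [|y2 v] //=; rewrite ?orbF //.
have -> : [&& a == k.-1, x2 == k.-1, a == k & y2 == k] = false.
  by apply/negbTE/and4P => -[/eqP h1 _ /eqP h2 _]; lia.
have -> : [&& a == k.-1, y2 == k.-1, a == k & x2 == k] = false.
  by apply/negbTE/and4P => -[/eqP h1 _ /eqP h2 _]; lia.
by rewrite /= orbF.
Qed.

Lemma step_le a b u v : padj k (a :: u) (b :: v) -> b <= a.+1.
Proof.
move=> /= /or3P [/andP [/eqP -> _] | /and3P [/orP [/eqP <-|/eqP <-] _ _] |]; try lia.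
case: u v => [|x2 u] [|y2 v] //= /andP [/orP [|] /and4P [/eqP -> _ /eqP -> _] _]; lia.
Qed.

Lemma up_shape a b u v : padj k (a :: u) (b :: v) -> b = a.+1 ->
  (b <= k.-1 /\ v = u) \/ (a = k.-1 /\ b = k /\ exists w, u = k.-1 :: w /\ v = k :: w).
Proof.
move=> H E; move: H => /= /or3P [/andP [/eqP ab _]| /and3P [_ hm /eqP uv] |]; first lia.
  by left; split; [rewrite E; move: hm; rewrite E; lia | ].
case: u v => [|x2 u] [|y2 v] //= /andP [/orP [|] /and4P [/eqP h1 /eqP h2 /eqP h3 /eqP h4] /eqP uv]; last lia.
by right; split=> //; split=> //; exists u; rewrite h2 h4 uv.
Qed.

Lemma down_shape a b u v : padj k (a :: u) (b :: v) -> a = b.+1 ->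
  (a <= k.-1 /\ v = u) \/ (a = k /\ b = k.-1 /\ exists w, u = k :: w /\ v = k.-1 :: w).
Proof.
move=> H E; move: H => /= /or3P [/andP [/eqP ab _]| /and3P [_ hm /eqP uv] |]; first lia.
  by left; split; [move: hm; rewrite E; lia | ].
case: u v => [|x2 u] [|y2 v] //= /andP [/orP [|] /and4P [/eqP h1 /eqP h2 /eqP h3 /eqP h4] /eqP uv]; first lia.
by right; split=> //; split=> //; exists u; rewrite h2 h4 uv.
Qed.

Lemma padj_cross a u v : 0 < a <= k.-1 -> padj k (a.-1 :: u) (a :: v) = (u == v).
Proof.
move=> ha /=.
have -> : (a.-1 == a) = false by apply/eqP; lia.
have -> : (a.-1.+1 == a) by apply/eqP; lia.
have -> : maxn a.-1 a <= k.-1 by rewrite geq_max; apply/andP; split; lia.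
rewrite /=.
case: (u == v); rewrite ?orbT //= ?orbF.
case: u v => [|x2 u] [|y2 v] //=.
have -> : (a == k) = false by apply/eqP; lia.
have -> : (a.-1 == k) = false by apply/eqP; lia.
by rewrite !andbF.
Qed.

Lemma padj_crossk u v : padj k [:: k.-1, k.-1 & u] [:: k, k & v] = (u == v).
Proof.
rewrite /=.
have -> : (k.-1 == k) = false by apply/eqP; lia.
have -> : maxn k.-1 k <= k.-1 = false by apply/negbTE; rewrite -ltnNge leq_max; apply/orP; right; lia.
by rewrite !eqxx /= !andbF.
Qed.

End Adj2.

Section Cube.
Variable i : nat.

Definition flip (l : 'I_i) (x : cube i) : cube i :=
  [ffun m => if m == l then ~~ x m else x m].

Lemma flipE l x m : flip l x m = if m == l then ~~ x m else x m.
Proof. by rewrite ffunE. Qed.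

Lemma flipK l x : flip l (flip l x) = x.
Proof. by apply/ffunP => m; rewrite !ffunE; case: eqP => // _; rewrite negbK. Qed.

Lemma flipC l m x : flip l (flip m x) = flip m (flip l x).
Proof. by apply/ffunP => p; rewrite !ffunE; case: (p == l); case: (p == m). Qed.

Lemma flip_inj_l l m x : flip l x = flip m x -> l = m.
Proof.
move=> E; apply/eqP/negPn/negP => ne.
have := congr1 (fun f : cube i => f l) E; rewrite !ffunE eqxx.
rewrite (negbTE ne); by case: (x l).
Qed.

Lemma flip_inj l : injective (flip l).
Proof. by move=> x y E; rewrite -(flipK l x) E flipK. Qed.

Lemma cube_adj_flip x l : cube_adj x (flip l x).
Proof.
rewrite /cube_adj.
have -> : [set j | x j != flip l x j] = [set l].
  by apply/setP => m; rewrite !inE ffunE; case: (m =P l) => [->|]; case: (x _).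
by rewrite cards1.
Qed.

Lemma cube_adjP x y : cube_adj x y -> exists l, y = flip l x.
Proof.
move/cards1P=> [l E]; exists l; apply/ffunP => m; rewrite ffunE.
have := congr1 (fun A : {set 'I_i} => m \in A) E; rewrite !inE.
by case: (m =P l) => [->|_]; case: (x _); case: (y _).
Qed.

Lemma cube_adj_irr (x : cube i) : cube_adj x x = false.
Proof.
rewrite /cube_adj.
have -> : [set j | x j != x j] = set0 by apply/setP => m; rewrite !inE eqxx.
by rewrite cards0.
Qed.

Lemma flip_ind (T : Type) (Q : cube i -> T) (J : pred 'I_i) :
  (forall x l, J l -> Q (flip l x) = Q x) ->
  forall x y : cube i, (forall l, ~~ J l -> x l = y l) -> Q x = Q y.
Proof.
move=> HQ x y; move E: #|[set l : 'I_i | x l != y l]| => d.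
elim: d x E => [|d IH] x E Hxy.
  have -> : x = y; last by [].
  apply/ffunP => m; apply/eqP/negPn/negP => ne.
  have : m \in [set l | x l != y l] by rewrite inE.
  by rewrite (cards0_eq E) inE.
have : 0 < #|[set l | x l != y l]| by rewrite E.
case/card_gt0P => l; rewrite inE => nl.
have Jl : J l.
  by apply/negPn/negP => nJ; rewrite (Hxy l nJ) eqxx in nl.
rewrite -(HQ x l Jl); apply: IH.
  have -> : [set m | flip l x m != y m] = [set m | x m != y m] :\ l.
    apply/setP => m; rewrite !inE !ffunE.
    by case: (m =P l) => [->|_] /=; [move: nl; case: (x l); case: (y l) | ].
  by move: E; rewrite (cardsD1 l) inE nl add1n => -[].
move=> m nJ; rewrite ffunE.
have -> : (m == l) = false by apply/eqP => E'; rewrite E' Jl in nJ.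
exact: Hxy.
Qed.

Variable h : cube i -> nat.
Hypothesis Hle : forall x l, h (flip l x) <= (h x).+1.
Hypothesis Hup : forall x l m, h (flip l x) = (h x).+1 -> h (flip m x) = (h x).+1 -> l = m.
Hypothesis Hdn : forall x l m, (h (flip l x)).+1 = h x -> (h (flip m x)).+1 = h x -> l = m.

Lemma square x j l : j != l -> h (flip j x) + h (flip l x) = h x + h (flip j (flip l x)).
Proof.
move=> ne.
have ne' : j <> l by move/eqP: ne.
have e1 := Hle x j. have e2 := Hle (flip j x) j. rewrite flipK in e2.
have e3 := Hle x l. have e4 := Hle (flip l x) l. rewrite flipK in e4.
have e5 := Hle (flip l x) j. have e6 := Hle (flip j (flip l x)) j. rewrite flipK in e6.
have e7 := Hle (flip j x) l. rewrite flipC in e7.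
have e8 := Hle (flip j (flip l x)) l. rewrite flipC flipK in e8.
have u1 : ~ (h (flip j x) = (h x).+1 /\ h (flip l x) = (h x).+1).
  by case=> a b; apply: ne'; apply: (Hup a b).
have u2 : ~ ((h (flip j x)).+1 = h x /\ (h (flip l x)).+1 = h x).
  by case=> a b; apply: ne'; apply: (Hdn a b).
have v1 : ~ (h x = (h (flip j x)).+1 /\ h (flip j (flip l x)) = (h (flip j x)).+1).
  case=> a b; apply: ne'; apply: (Hup (x := flip j x)); first by rewrite flipK.
  by rewrite flipC.
have v2 : ~ ((h x).+1 = h (flip j x) /\ (h (flip j (flip l x))).+1 = h (flip j x)).
  case=> a b; apply: ne'; apply: (Hdn (x := flip j x)); first by rewrite flipK.
  by rewrite flipC.
have z1 : ~ (h x = (h (flip l x)).+1 /\ h (flip j (flip l x)) = (h (flip l x)).+1).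
  case=> a b; apply: ne'; apply: esym; apply: (Hup (x := flip l x)); first by rewrite flipK.
  by [].
have z2 : ~ ((h x).+1 = h (flip l x) /\ (h (flip j (flip l x))).+1 = h (flip l x)).
  case=> a b; apply: ne'; apply: esym; apply: (Hdn (x := flip l x)); first by rewrite flipK.
  by [].
have w1 : ~ (h (flip l x) = (h (flip j (flip l x))).+1 /\ h (flip j x) = (h (flip j (flip l x))).+1).
  case=> a b; apply: ne'; apply: (Hup (x := flip j (flip l x))); first by rewrite flipK.
  by rewrite flipC flipK.
have w2 : ~ ((h (flip l x)).+1 = h (flip j (flip l x)) /\ (h (flip j x)).+1 = h (flip j (flip l x))).
  case=> a b; apply: ne'; apply: (Hdn (x := flip j (flip l x))); first by rewrite flipK.
  by rewrite flipC flipK.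
lia.
Qed.

Definition upQ j x := h (flip j x) == (h x).+1.

Lemma upQ_inv j x l : l != j -> upQ j (flip l x) = upQ j x.
Proof.
move=> ne; rewrite /upQ flipC.
have E := square x ne.
by apply/eqP/eqP; lia.
Qed.

Lemma cube_struct :
  (forall x y, h x = h y) \/ exists j s b, forall x, h x = b + (x j == s).
Proof.
case: (boolP [exists x, exists j, h (flip j x) != h x]); last first.
  move/existsPn => H; left => x y.
  apply: (flip_ind (J := predT)) => // z l _.
  by move: (H z); rewrite negb_exists => /forallP /(_ l) /negPn /eqP.
case/existsP => x0 /existsP [j0 ne0]; right.
have [y Hy] : exists y, upQ j0 y.
  case: (ltngtP (h (flip j0 x0)) (h x0)) => c.
  - exists (flip j0 x0); rewrite /upQ flipK; apply/eqP.
    by have := Hle (flip j0 x0) j0; rewrite flipK; lia.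
  - by exists x0; rewrite /upQ; apply/eqP; have := Hle x0 j0; lia.
  - by rewrite c eqxx in ne0.
have Dinv (x : cube i) : x j0 = y j0 -> upQ j0 x.
  move=> E; rewrite (@flip_ind _ (upQ j0) (predC1 j0) _ x y) //.
    by move=> z l /= ne; apply: upQ_inv.
  by move=> l /= /negPn /eqP ->.
have Hzero l (x : cube i) : l != j0 -> h (flip l x) = h x.
  move=> nl; apply/eqP/negPn/negP => nh.
  have [x1 Hx1] : exists x1, upQ l x1.
    case: (ltngtP (h (flip l x)) (h x)) => c.
    - exists (flip l x); rewrite /upQ flipK; apply/eqP.
      by have := Hle (flip l x) l; rewrite flipK; lia.
    - by exists x; rewrite /upQ; apply/eqP; have := Hle x l; lia.
    - by rewrite c eqxx in nh.
  have [z [Hz1 Hz2]] : exists z : cube i, z j0 = y j0 /\ upQ l z.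
    case: (boolP (x1 j0 == y j0)) => [/eqP e|ne].
      by exists x1.
    exists (flip j0 x1); rewrite upQ_inv 1?eq_sym // ffunE eqxx; split=> //.
    by move: ne; case: (x1 j0); case: (y j0).
  have := Dinv z Hz1; rewrite /upQ => /eqP a.
  move/eqP: Hz2 => b.
  by move: nl; rewrite (Hup a b) eqxx.
have Hconst (x x' : cube i) : x j0 = x' j0 -> h x = h x'.
  move=> E; apply: (flip_ind (J := predC1 j0)) => //.
    by move=> z l /= ne; apply: Hzero.
  by move=> l /= /negPn /eqP ->.
exists j0, (~~ y j0), (h y) => x.
case: (boolP (x j0 == y j0)) => [/eqP e|ne].
  have -> : (x j0 == ~~ y j0) = false by rewrite e; case: (y j0).
  by rewrite addn0; apply: Hconst.
have -> : (x j0 == ~~ y j0) by move: ne; case: (x j0); case: (y j0).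
have := Dinv y erefl; rewrite /upQ addn1 => /eqP <-.
apply: Hconst.
by rewrite ffunE eqxx; move: ne; case: (x j0); case: (y j0).
Qed.

End Cube.

Section Ins.
Variable i : nat.
Implicit Types (j : 'I_i.+1) (y : cube i) (x : cube i.+1).

Definition ins j (b : bool) y : cube i.+1 :=
  [ffun m => if unlift j m is Some m' then y m' else b].
Definition proj j x : cube i := [ffun m => x (lift j m)].

Lemma ins_j j b y : ins j b y j = b.
Proof. by rewrite ffunE unlift_none. Qed.

Lemma ins_lift j b y m : ins j b y (lift j m) = y m.
Proof. by rewrite ffunE liftK. Qed.

Lemma proj_ins j b y : proj j (ins j b y) = y.
Proof. by apply/ffunP => m; rewrite ffunE ins_lift. Qed.

Lemma ins_proj j x : ins j (x j) (proj j x) = x.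
Proof.
apply/ffunP => m; rewrite ffunE; case: unliftP => [m' ->|->] //.
by rewrite ffunE.
Qed.

Lemma ins_inj j b b' y y' : ins j b y = ins j b' y' -> b = b' /\ y = y'.
Proof.
move=> E; split; first by rewrite -(ins_j j b y) E ins_j.
by rewrite -(proj_ins j b y) E proj_ins.
Qed.

Lemma flip_ins_lift j b y l : flip (lift j l) (ins j b y) = ins j b (flip l y).
Proof.
apply/ffunP => m; rewrite !ffunE; case: unliftP => [m' ->|->].
  by rewrite (inj_eq (@lift_inj _ j)) ffunE.
by rewrite (negbTE (neq_lift _ _)).
Qed.

Lemma flip_ins_j j b y : flip j (ins j b y) = ins j (~~ b) y.
Proof.
apply/ffunP => m; rewrite !ffunE; case: unliftP => [m' ->|->].
  by rewrite eq_sym (negbTE (neq_lift _ _)).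
by rewrite eqxx.
Qed.

Lemma cube_adj_ins j b b' y y' :
  cube_adj (ins j b y) (ins j b' y') = if b == b' then cube_adj y y' else y == y'.
Proof.
case: (b =P b') => [<-|ne]; apply/idP/idP.
- case/cube_adjP => m; case: (unliftP j m) => [l ->|->].
    by rewrite flip_ins_lift => /ins_inj [_ ->]; apply: cube_adj_flip.
  by rewrite flip_ins_j => /ins_inj [] /esym; case: b.
- by case/cube_adjP => l ->; rewrite -flip_ins_lift; apply: cube_adj_flip.
- case/cube_adjP => m; case: (unliftP j m) => [l ->|->].
    by rewrite flip_ins_lift => /ins_inj [] /esym.
  by rewrite flip_ins_j => /ins_inj [_ ->].
- move/eqP <-; have -> : b' = ~~ b by move: ne; case: b; case: b'.
  by rewrite -flip_ins_j; apply: cube_adj_flip.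
Qed.

End Ins.

Section Words.
Variable k : nat.
Hypothesis hk : 1 < k.

Local Notation W n := (word n k).

Definition CS n i : {set {set W n}} :=
  [set S : {set W n} | [forall w in S, is_pell w] &&
      [exists f : {ffun cube i -> W n},
         [&& injectiveb f, f @: setT == S &
             [forall a, forall b, pi_adj (f a) (f b) == cube_adj a b]]]].

Lemma cube_countE n i : cube_count n k i = #|CS n i|.
Proof. by []. Qed.

Definition emb n i (f : cube i -> W n) :=
  [/\ injective f, forall a, is_pell (f a) & forall a b, pi_adj (f a) (f b) = cube_adj a b].

Lemma CSP n i (S : {set W n}) :
  S \in CS n i <-> exists f : cube i -> W n, emb f /\ S = f @: setT.
Proof.
split.
  rewrite inE => /andP [/forallP HP /existsP [f /and3P [/injectiveP inj /eqP ES /forallP HA]]].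
  exists (fun a => f a); split; last by rewrite -ES.
  split=> //.
    by move=> a; have := HP (f a); rewrite -ES imset_f ?inE.
  by move=> a b; have := HA a => /forallP /(_ b) /eqP.
case=> f [[inj HP HA] ->]; rewrite inE; apply/andP; split.
  by apply/forallP => w; apply/implyP => /imsetP [a _ ->].
apply/existsP; exists [ffun a => f a]; apply/and3P; split.
- by apply/injectiveP => a b; rewrite !ffunE; apply: inj.
- by apply/eqP; apply: eq_imset => a; rewrite ffunE.
- by apply/forallP => a; apply/forallP => b; rewrite !ffunE HA.
Qed.

Definition hd n (w : W n.+1) : nat := thead w.

Definition wcons n (a : 'I_k.+1) (w : W n) : W n.+1 := [tuple of a :: w].

Lemma wseq_cons n a (w : W n) : wseq (wcons a w) = (a : nat) :: wseq w.
Proof. by []. Qed.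

Lemma hd_wcons n a (w : W n) : hd (wcons a w) = a.
Proof. by rewrite /hd theadE. Qed.

Lemma wcons_inj n a : injective (@wcons n a).
Proof. by move=> u v /(congr1 (fun t => behead (tval t))) /= /val_inj. Qed.

Lemma wseq_eta n (w : W n.+1) : wseq w = hd w :: wseq [tuple of behead w].
Proof. by rewrite {1}(tuple_eta w). Qed.

Lemma wseq_inj n : injective (@wseq n k).
Proof. by move=> u v /(inj_map val_inj) /val_inj. Qed.

Lemma size_wseq n (w : W n) : size (wseq w) = n.
Proof. by rewrite size_map size_tuple. Qed.

Lemma pi_adjE n (u v : W n) : pi_adj u v = padj k (wseq u) (wseq v).
Proof. by rewrite /pi_adj pell_adj_padj // !size_wseq. Qed.

Lemma hd_lt n (w : W n.+1) : hd w < k.+1.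
Proof. exact: ltn_ord. Qed.

Definition M n (S : {set W n.+1}) := \max_(w in S) hd w.
Definition B n (S : {set W n.+1}) := [exists w in S, hd w != M S].

Lemma M_ge n (S : {set W n.+1}) w : w \in S -> hd w <= M S.
Proof. by move=> wS; apply: leq_bigmax_cond. Qed.

Lemma M_att n (S : {set W n.+1}) : S != set0 -> exists2 w, w \in S & hd w = M S.
Proof.
move=> /set0Pn [w0 w0S].
have c0 : 0 < #|S| by apply/card_gt0P; exists w0.
have [w wS E] := eq_bigmax_cond (@hd n) c0.
by exists w => //; rewrite /M E.
Qed.

Lemma notB n (S : {set W n.+1}) : ~~ B S -> forall w, w \in S -> hd w = M S.
Proof. by move/existsPn => H w wS; have := H w; rewrite wS /= => /negPn /eqP. Qed.

Lemma MB_const n (S : {set W n.+1}) a :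
  S != set0 -> (forall w, w \in S -> hd w = a) -> M S = a /\ ~~ B S.
Proof.
move=> ne H.
have [w wS E] := M_att ne.
have MSa : M S = a by rewrite -E H.
split=> //; apply/existsPn => w'; apply/negP => /andP [w'S]; by rewrite H // MSa eqxx.
Qed.

Lemma MB_two n (S : {set W n.+1}) a w1 w2 : 0 < a ->
  (forall w, w \in S -> hd w = a \/ hd w = a.-1) ->
  w1 \in S -> hd w1 = a -> w2 \in S -> hd w2 = a.-1 -> M S = a /\ B S.
Proof.
move=> a0 H w1S h1 w2S h2.
have MSa : M S = a.
  apply/eqP; rewrite eqn_leq; apply/andP; split; last by rewrite -h1 M_ge.
  apply/bigmax_leqP => w wS; case: (H w wS) => ->; lia.
split=> //; apply/existsP; exists w2; rewrite w2S h2 MSa /=; apply/eqP; lia.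
Qed.

Lemma cube_nonempty i : exists x : cube i, True.
Proof. by exists [ffun _ => false]. Qed.

Lemma struct_emb n i (f : cube i -> W n.+1) : emb f ->
  (forall x y, hd (f x) = hd (f y)) \/
  exists j s b, forall x, hd (f x) = b + (x j == s).
Proof.
case=> inj HP HA.
have adjf x l : padj k (hd (f x) :: wseq [tuple of behead (f x)])
                      (hd (f (flip l x)) :: wseq [tuple of behead (f (flip l x))]).
  by rewrite -!wseq_eta -pi_adjE HA cube_adj_flip.
apply: (cube_struct (h := fun x => hd (f x))).
- by move=> x l; apply: step_le (adjf x l).
- move=> x l m E1 E2; apply: (flip_inj_l (x := x)); apply: inj; apply: wseq_inj.
  rewrite (wseq_eta (f (flip l x))) (wseq_eta (f (flip m x))) E1 E2.
  case: (up_shape hk (adjf x l) E1) => [[b1 e1]|[a1 [b1 [w1 [u1 e1]]]]];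
  case: (up_shape hk (adjf x m) E2) => [[b2 e2]|[a2 [b2 [w2 [u2 e2]]]]].
  + by rewrite e1 e2.
  + lia.
  + lia.
  + by rewrite e1 e2; move: u1; rewrite u2 => -[->].
- move=> x l m E1 E2; apply: (flip_inj_l (x := x)); apply: inj; apply: wseq_inj.
  have E12 : hd (f (flip l x)) = hd (f (flip m x)) by lia.
  rewrite (wseq_eta (f (flip l x))) (wseq_eta (f (flip m x))) E12.
  case: (down_shape hk (adjf x l) (esym E1)) => [[b1 e1]|[a1 [b1 [w1 [u1 e1]]]]];
  case: (down_shape hk (adjf x m) (esym E2)) => [[b2 e2]|[a2 [b2 [w2 [u2 e2]]]]].
  + by rewrite e1 e2.
  + lia.
  + lia.
  + by rewrite e1 e2; move: u1; rewrite u2 => -[->].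
Qed.

End Words.

Section Fibers.
Variable k : nat.
Hypothesis hk : 1 < k.

Local Notation W n := (word n k).
Local Notation CS := (CS k).
Local Notation emb := (@emb k _ _).

Lemma preim_fun (X : finType) m n (C : W m -> W n) (f : X -> W n) :
  (forall x, exists w, f x = C w) -> exists g : X -> W m, forall x, f x = C (g x).
Proof.
move=> H; exists (fun x => odflt [tuple of nseq m ord0] [pick w | C w == f x]) => x.
case: pickP => [w /eqP -> //|N].
by have [w E] := H x; have := N w; rewrite E eqxx.
Qed.

Lemma pi_adj_sym n (u v : W n) : pi_adj u v = pi_adj v u.
Proof. by rewrite !pi_adjE padj_sym. Qed.

Lemma B_nonconst n i (S : {set W n.+1}) (f : cube i -> W n.+1) :
  S = f @: setT -> B S -> (forall x y, hd (f x) = hd (f y)) -> False.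
Proof.
move=> ES BS Hc.
have [x0 _] := cube_nonempty i.
have ne : S != set0 by apply/set0Pn; exists (f x0); rewrite ES imset_f.
have H : forall w, w \in S -> hd w = hd (f x0).
  by move=> w; rewrite ES => /imsetP [x _ ->].
have [_ nB] := MB_const ne H.
by rewrite BS in nB.
Qed.

Lemma fiber_const m n i (C : W m -> W n.+1) (a : nat) :
  injective C -> (forall w, hd (C w) = a) ->
  (forall u v, pi_adj (C u) (C v) = pi_adj u v) ->
  (forall w, is_pell (C w) = is_pell w) ->
  (forall p, is_pell p -> hd p = a -> exists w, p = C w) ->
  #|[set S in CS n.+1 i | (M S == a) && ~~ B S]| = #|CS m i|.
Proof.
move=> Cinj Chd Cadj Cpell Cshape.
suff -> : [set S in CS n.+1 i | (M S == a) && ~~ B S] = (fun T : {set W m} => C @: T) @: CS m i.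
  by rewrite card_imset //; apply: imset_inj.
apply/setP => S; rewrite inE; apply/idP/idP.
- case/andP => /CSP [f [[inj HP HA] ES]] /andP [/eqP MS nB].
  have hdf x : hd (f x) = a.
    by rewrite -MS; apply: (notB nB); rewrite ES imset_f.
  have [g Hg] := preim_fun (fun x => Cshape (f x) (HP x) (hdf x)).
  apply/imsetP; exists (g @: setT).
    apply/CSP; exists g; split=> //; split.
    - by move=> x y E; apply: inj; rewrite !Hg E.
    - by move=> x; rewrite -Cpell -Hg.
    - by move=> x y; rewrite -Cadj -!Hg HA.
  by rewrite ES -imset_comp; apply: eq_imset => x /=.
- case/imsetP => T /CSP [g [[inj HP HA] ET]] ->.
  apply/andP; split.
    apply/CSP; exists (fun x => C (g x)); split; last by rewrite ET -imset_comp.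
    split.
    - by move=> x y /Cinj /inj.
    - by move=> x; rewrite Cpell.
    - by move=> x y; rewrite Cadj.
  have [x0 _] := cube_nonempty i.
  have ne : C @: T != set0 by apply/set0Pn; exists (C (g x0)); rewrite ET imset_f // imset_f.
  have H : forall w, w \in C @: T -> hd w = a by move=> w /imsetP [w' _ ->].
  by have [-> ->] := MB_const ne H; rewrite eqxx.
Qed.

Lemma fiber_cross m n i (L U : W m -> W n.+1) (a : nat) : 0 < a ->
  injective L -> injective U ->
  (forall w, hd (L w) = a.-1) -> (forall w, hd (U w) = a) ->
  (forall u v, pi_adj (L u) (L v) = pi_adj u v) ->
  (forall u v, pi_adj (U u) (U v) = pi_adj u v) ->
  (forall u v, pi_adj (L u) (U v) = (u == v)) ->
  (forall w, is_pell (L w) = is_pell w) ->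
  (forall w, is_pell (U w) = is_pell w) ->
  (forall p q, hd p = a.-1 -> hd q = a -> pi_adj p q -> exists w, p = L w /\ q = U w) ->
  #|[set S in CS n.+1 i.+1 | (M S == a) && B S]| = #|CS m i|.
Proof.
move=> a0 Linj Uinj Lhd Uhd LL UU LU Lp Up shape.
have LneU u v : L u <> U v by move=> E; have := Lhd u; rewrite E Uhd; lia.
pose Phi (T : {set W m}) := L @: T :|: U @: T.
have PhiL T w : (L w \in Phi T) = (w \in T).
  rewrite inE mem_imset //.
  case: (w \in T) => //=; apply/negbTE/imsetP => -[w' _ /LneU] //.
suff -> : [set S in CS n.+1 i.+1 | (M S == a) && B S] = Phi @: CS m i.
  rewrite card_imset // => T1 T2 E; apply/setP => w.
  by rewrite -!PhiL E.
apply/setP => S; rewrite inE; apply/idP/idP.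
- case/andP => /CSP [f [[inj HP HA] ES]] /andP [/eqP MS BS].
  case: (struct_emb hk (And3 inj HP HA)) => [Hc|[j [s [b Hb]]]].
    by case: (B_nonconst ES BS Hc).
  pose up y := ins j s y; pose lo y := ins j (~~ s) y.
  have hup y : hd (f (up y)) = b.+1 by rewrite Hb ins_j eqxx addn1.
  have hlo y : hd (f (lo y)) = b by rewrite Hb ins_j; case: (s); rewrite /= addn0.
  have [y0 _] := cube_nonempty i.
  have Hh : forall w, w \in S -> hd w = b.+1 \/ hd w = b.+1.-1.
    move=> w; rewrite ES => /imsetP [x _ ->]; rewrite Hb.
    by case: (x j == s); [left; rewrite addn1 | right; rewrite addn0].
  have fS x : f x \in S by rewrite ES imset_f.
  have [MSb _] := MB_two hk (ltn0Sn b) Hh (fS (up y0)) (hup y0) (fS (lo y0)) (hlo y0).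
  have ab : a = b.+1 by rewrite -MS.
  have adjlu y : pi_adj (f (lo y)) (f (up y)).
    by rewrite HA cube_adj_ins; case: (s) => /=.
  clear MS MSb; subst a.
  have Hex y : exists w, f (lo y) = L w.
    by have [w [E _]] := shape _ _ (hlo y) (hup y) (adjlu y); exists w.
  have [g Hg] := preim_fun Hex.
  have Hgu y : f (up y) = U (g y).
    have [w [E1 E2]] := shape _ _ (hlo y) (hup y) (adjlu y).
    by rewrite E2; congr U; apply: Linj; rewrite -E1 Hg.
  apply/imsetP; exists (g @: setT).
    apply/CSP; exists g; split=> //; split.
    - move=> y y' E.
      have : lo y = lo y' by apply: inj; rewrite !Hg E.
      by case/ins_inj.
    - by move=> y; rewrite -Lp -Hg.
    - by move=> y y'; rewrite -LL -!Hg HA cube_adj_ins eqxx.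
  apply/setP => w; rewrite ES /Phi; apply/imsetP/setUP.
  - case=> x _ ->.
    have -> : f x = f (ins j (x j) (proj j x)) by rewrite ins_proj.
    case: (boolP (x j == s)) => [/eqP -> | ne].
      by right; rewrite (Hgu (proj j x)); apply: imset_f; apply: imset_f.
    have -> : x j = ~~ s by move: ne; case: (x j); case: (s).
    by left; rewrite (Hg (proj j x)); apply: imset_f; apply: imset_f.
  - case => /imsetP [w' /imsetP [y _ ->] ->].
      by exists (lo y); rewrite ?inE // Hg.
    by exists (up y); rewrite ?inE // Hgu.
- case/imsetP => T /CSP [g [[inj HP HA] ET]] ->.
  pose f (x : cube i.+1) := if x ord0 then U (g (proj ord0 x)) else L (g (proj ord0 x)).
  have fins b y : f (ins ord0 b y) = if b then U (g y) else L (g y).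
    by rewrite /f ins_j proj_ins.
  have fx x : f x = f (ins ord0 (x ord0) (proj ord0 x)) by rewrite ins_proj.
  have Hadj b y b' y' : pi_adj (f (ins ord0 b y)) (f (ins ord0 b' y')) =
                         cube_adj (ins ord0 b y) (ins ord0 b' y').
    rewrite !fins cube_adj_ins; case: b; case: b' => /=.
    - by rewrite UU HA.
    - by rewrite pi_adj_sym LU (inj_eq inj) eq_sym.
    - by rewrite LU (inj_eq inj).
    - by rewrite LL HA.
  have EPhi : Phi T = f @: setT.
    apply/setP => w; rewrite ET /Phi; apply/setUP/imsetP.
    - case => /imsetP [w' /imsetP [y _ ->] ->].
        by exists (ins ord0 false y); rewrite ?inE // fins.
      by exists (ins ord0 true y); rewrite ?inE // fins.
    - case=> x _ ->; rewrite fx fins.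
      by case: (x ord0); [right | left]; apply: imset_f; apply: imset_f.
  rewrite EPhi; apply/andP; split.
    apply/CSP; exists f; split=> //; split.
    - move=> x y; rewrite (fx x) (fx y) !fins => E.
      rewrite -(ins_proj ord0 x) -(ins_proj ord0 y).
      move: E; case: (x ord0); case: (y ord0) => E.
      + by rewrite (inj _ _ (Uinj _ _ E)).
      + by case: (LneU _ _ (esym E)).
      + by case: (LneU _ _ E).
      + by rewrite (inj _ _ (Linj _ _ E)).
    - by move=> x; rewrite fx fins; case: (x ord0); rewrite ?Up ?Lp.
    - by move=> x y; rewrite (fx x) (fx y) Hadj !ins_proj.
  have [y0 _] := cube_nonempty i.
  have fS x : f x \in f @: setT by rewrite imset_f.
  have Hh : forall w, w \in f @: setT -> hd w = a \/ hd w = a.-1.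
    move=> w /imsetP [x _ ->]; rewrite fx fins.
    by case: (x ord0); [left; rewrite Uhd | right; rewrite Lhd].
  have h1 : hd (f (ins ord0 true y0)) = a by rewrite fins Uhd.
  have h2 : hd (f (ins ord0 false y0)) = a.-1 by rewrite fins Lhd.
  have [-> ->] := MB_two hk a0 Hh (fS _) h1 (fS _) h2.
  by rewrite eqxx.
Qed.

Lemma fiber_cross0 n a : #|[set S in CS n.+1 0 | (M S == a) && B S]| = 0.
Proof.
apply/eqP; rewrite cards_eq0; apply/eqP/setP => S; rewrite inE in_set0.
apply/negbTE/andP => -[/CSP [f [[inj HP HA] ES]] /andP [_ BS]].
case: (struct_emb hk (And3 inj HP HA)) => [Hc|[[j //]]].
exact: (B_nonconst ES BS Hc).
Qed.

End Fibers.

Section Inst.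
Variable k : nat.
Hypothesis hk : 1 < k.

Local Notation W n := (word n k).
Local Notation CS := (CS k).

Lemma pellb_neq a s : a != k -> pellb k (a :: s) = pellb k s.
Proof. by move=> /negbTE /= ->. Qed.

Lemma wseq_behead n (t : W n.+1) : wseq [tuple of behead t] = behead (wseq t).
Proof. by rewrite /wseq /= behead_map. Qed.

Lemma hd_inord n a (w : W n) : a < k.+1 -> hd (wcons (inord a) w) = a.
Proof. by move=> h; rewrite hd_wcons inordK. Qed.

Definition wcons2 n (c : 'I_k.+1) (w : W n) : W n.+2 := wcons c (wcons c w).

Lemma wcons2_inj n c : injective (@wcons2 n c).
Proof. by move=> u v /wcons_inj /wcons_inj. Qed.

Lemma wseq_cons2 n c (w : W n) : wseq (wcons2 c w) = [:: (c : nat), (c : nat) & wseq w].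
Proof. by []. Qed.

Lemma fib_const_lt n i a : a < k ->
  #|[set S in CS n.+1 i | (M S == a) && ~~ B S]| = #|CS n i|.
Proof.
move=> ak; have ak1 : a < k.+1 by lia.
have ane : (inord a : 'I_k.+1) != k :> nat by rewrite inordK //; apply/eqP; lia.
apply: (@fiber_const k n n i (@wcons k n (inord a)) a).
- exact: wcons_inj.
- by move=> w; rewrite hd_inord.
- by move=> u v; rewrite !pi_adjE !wseq_cons padj_same.
- by move=> w; rewrite /is_pell wseq_cons pellb_neq.
- move=> p _ hp; exists [tuple of behead p]; apply: wseq_inj.
  by rewrite wseq_cons wseq_eta inordK // hp.
Qed.

Lemma fib_const_k m i :
  #|[set S in CS m.+2 i | (M S == k) && ~~ B S]| = #|CS m i|.
Proof.
have kk : (inord k : 'I_k.+1) = k :> nat by rewrite inordK.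
apply: (@fiber_const k m m.+1 i (@wcons2 m (inord k)) k).
- exact: wcons2_inj.
- by move=> w; rewrite hd_inord.
- by move=> u v; rewrite !pi_adjE !wseq_cons2 !padj_same.
- by move=> w; rewrite /is_pell wseq_cons2 kk /= eqxx.
- move=> p Pp hp; exists [tuple of behead [tuple of behead p]]; apply: wseq_inj.
  move: Pp; rewrite wseq_cons2 kk /is_pell (wseq_eta p) (wseq_eta [tuple of behead p]) hp /= eqxx.
  by case/andP => /eqP ->.
Qed.


Lemma fib_k_len1 i (P : pred {set W 1}) :
  #|[set S in CS 1 i | (M S == k) && P S]| = 0.
Proof.
apply/eqP; rewrite cards_eq0; apply/eqP/setP => S; rewrite inE in_set0.
apply/negbTE/andP => -[/CSP [f [[inj HP HA] ES]] /andP [/eqP MS _]].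
have ne : S != set0.
  by have [x0 _] := cube_nonempty i; apply/set0Pn; exists (f x0); rewrite ES imset_f.
have [w wS hw] := M_att ne.
move: wS; rewrite ES => /imsetP [x _ Ex].
have := HP x; rewrite -Ex /is_pell (wseq_eta w) hw MS.
by case: (wseq _) (size_wseq [tuple of behead w]) => //= _; rewrite eqxx.
Qed.

Lemma fib_zero_B n i : #|[set S in CS n.+1 i | (M S == 0) && B S]| = 0.
Proof.
apply/eqP; rewrite cards_eq0; apply/eqP/setP => S; rewrite inE in_set0.
apply/negbTE/andP => -[_ /andP [/eqP MS /existsP [w /andP [wS nw]]]].
by have := M_ge wS; move: nw; rewrite MS; lia.
Qed.

Lemma fib_cross_lt n i a : 0 < a < k ->
  #|[set S in CS n.+1 i.+1 | (M S == a) && B S]| = #|CS n i|.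
Proof.
move=> ha.
have a1 : a.-1 < k.+1 by lia.
have a2 : a < k.+1 by lia.
apply: (@fiber_cross k hk n n i (@wcons k n (inord a.-1)) (@wcons k n (inord a)) a).
- lia.
- exact: wcons_inj.
- exact: wcons_inj.
- by move=> w; rewrite hd_inord.
- by move=> w; rewrite hd_inord.
- by move=> u v; rewrite !pi_adjE !wseq_cons padj_same.
- by move=> u v; rewrite !pi_adjE !wseq_cons padj_same.
- move=> u v; rewrite !pi_adjE !wseq_cons !inordK // padj_cross //; last lia.
  by rewrite (inj_eq (@wseq_inj k n)).
- by move=> w; rewrite /is_pell wseq_cons pellb_neq // inordK //; apply/eqP; lia.
- by move=> w; rewrite /is_pell wseq_cons pellb_neq // inordK //; apply/eqP; lia.
- move=> p q hp hq; rewrite pi_adjE (wseq_eta p) (wseq_eta q) hp hq => A.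
  have E : a = a.-1.+1 by lia.
  case: (up_shape hk A E) => [[_ e]|[_ [e _]]]; last lia.
  exists [tuple of behead p]; split; apply: wseq_inj.
    by rewrite wseq_cons (wseq_eta p) hp inordK.
  by rewrite wseq_cons (wseq_eta q) hq inordK // e.
Qed.

Lemma fib_cross_k m i :
  #|[set S in CS m.+2 i.+1 | (M S == k) && B S]| = #|CS m i|.
Proof.
have kk : (inord k : 'I_k.+1) = k :> nat by rewrite inordK.
have kk1 : (inord k.-1 : 'I_k.+1) = k.-1 :> nat by rewrite inordK //; lia.
apply: (@fiber_cross k hk m m.+1 i (@wcons2 m (inord k.-1)) (@wcons2 m (inord k)) k).
- lia.
- exact: wcons2_inj.
- exact: wcons2_inj.
- by move=> w; rewrite hd_inord //; lia.
- by move=> w; rewrite hd_inord.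
- by move=> u v; rewrite !pi_adjE !wseq_cons2 !padj_same.
- by move=> u v; rewrite !pi_adjE !wseq_cons2 !padj_same.
- move=> u v; rewrite !pi_adjE !wseq_cons2 kk kk1 padj_crossk //.
  by rewrite (inj_eq (@wseq_inj k m)).
- move=> w; rewrite /is_pell wseq_cons2 kk1 !pellb_neq //; apply/eqP; lia.
- by move=> w; rewrite /is_pell wseq_cons2 kk /= eqxx.
- move=> p q hp hq; rewrite pi_adjE (wseq_eta p) (wseq_eta q) hp hq => A.
  have E : k = k.-1.+1 by lia.
  case: (up_shape hk A E) => [[b _]|[_ [_ [w [e1 e2]]]]]; first lia.
  exists [tuple of behead [tuple of behead p]]; split; apply: wseq_inj.
    by rewrite wseq_cons2 kk1 (wseq_behead [tuple of behead p]) e1 (wseq_eta p) hp e1.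
  by rewrite wseq_cons2 kk (wseq_behead [tuple of behead p]) e1 (wseq_eta q) hq e2.
Qed.

End Inst.


Lemma sum_split (K : nat) (F : nat -> nat) c X :
  (forall a, a < K -> F a = c + (if a == 0 then 0 else X)) ->
  \sum_(a < K) F a = K * c + K.-1 * X.
Proof.
elim: K => [|K IH] H; first by rewrite big_ord0.
rewrite big_ord_recr /= IH; last by move=> a aK; apply: H; lia.
rewrite H //; case: K {IH H} => [|K] /=; lia.
Qed.

Section Rec.
Variable k : nat.
Hypothesis hk : 1 < k.
Local Notation W n := (word n k).
Local Notation CS := (CS k).

Lemma part n i : #|CS n.+1 i| = \sum_(a < k.+1)
  (#|[set S in CS n.+1 i | (M S == a) && ~~ B S]| + #|[set S in CS n.+1 i | (M S == a) && B S]|).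
Proof.
have HM (S : {set W n.+1}) (a : 'I_k.+1) : (inord (M S) == a) = (M S == a).
  rewrite -(inj_eq val_inj) /= inordK // ltnS.
  by apply/bigmax_leqP => w _; rewrite -ltnS hd_lt.
rewrite -sum1_card (partition_big (fun S => (inord (M S) : 'I_k.+1)) predT) //=.
apply: eq_bigr => a _.
rewrite (bigID (@B k n)) /= addnC -!sum1_card.
congr (_ + _); apply: eq_bigl => S; rewrite in_set HM -andbA //.
Qed.


Lemma rec n i : #|CS n.+1 i| =
  k * #|CS n i| + (if n is m.+1 then #|CS m i| else 0) +
  (if i is i'.+1 then k.-1 * #|CS n i'| + (if n is m.+1 then #|CS m i'| else 0) else 0).
Proof.
rewrite part big_ord_recr /=.
rewrite (sum_split (F := fun a => #|[set S in CS n.+1 i | (M S == a) && ~~ B S]| +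
            #|[set S in CS n.+1 i | (M S == a) && B S]|)
          (c := #|CS n i|) (X := if i is i'.+1 then #|CS n i'| else 0)); last first.
  move=> a ak; rewrite fib_const_lt //; congr (_ + _).
  case: (a =P 0) => [->|a0]; first exact: fib_zero_B.
  case: i => [|i']; first exact: fiber_cross0.
  by rewrite fib_cross_lt //; lia.
case: n => [|m].
  rewrite !fib_k_len1 addn0.
  by case: i => [|i'] /=; rewrite ?muln0 ?addn0.
rewrite fib_const_k //.
case: i => [|i'] /=.
  by rewrite fiber_cross0 // muln0 !addn0.
rewrite fib_cross_k //.
by rewrite -!addnA; congr (_ + _); rewrite addnCA.
Qed.

End Rec.


Section Base.
Variable k : nat.
Local Notation W n := (word n k).
Local Notation CS := (CS k).

Lemma W0_eq (u v : W 0) : u = v.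
Proof. by rewrite (tuple0 u) (tuple0 v). Qed.

Lemma cube0_eq (x y : cube 0) : x = y.
Proof. by apply/ffunP => -[]. Qed.

Lemma CS00 : #|CS 0 0| = 1.
Proof.
have [x0 _] := cube_nonempty 0.
suff -> : CS 0 0 = [set setT] by rewrite cards1.
apply/setP => S; rewrite in_set1; apply/idP/idP.
  case/CSP => f [_ ES]; apply/eqP/setP => w; rewrite inE ES.
  by apply/imsetP; exists x0; rewrite ?inE // (W0_eq w (f x0)).
move/eqP ->; apply/CSP; exists (fun _ => [tuple]); split.
  split.
  - by move=> x y _; apply: cube0_eq.
  - by move=> _; rewrite /is_pell.
  - by move=> x y; rewrite (cube0_eq x y) cube_adj_irr pi_adjE.
apply/setP => w; rewrite inE; apply/esym/imsetP; exists x0; rewrite ?inE //.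
exact: W0_eq.
Qed.

Lemma CS0S i : #|CS 0 i.+1| = 0.
Proof.
apply/eqP; rewrite cards_eq0; apply/eqP/setP => S; rewrite in_set0.
apply/negbTE/negP => /CSP [f [[inj _ _] _]].
have [x0 _] := cube_nonempty i.+1.
have E := inj _ _ (W0_eq (f x0) (f (flip ord0 x0))).
by have := congr1 (fun x : cube i.+1 => x ord0) E; rewrite ffunE eqxx; case: (x0 ord0).
Qed.

Lemma CS_big n i : #|{: W n}| < i -> #|CS n i| = 0.
Proof.
move=> hi; apply/eqP; rewrite cards_eq0; apply/eqP/setP => S; rewrite in_set0.
apply/negbTE/negP => /CSP [f [[inj _ _] _]].
have := leq_card _ inj; rewrite card_ffun card_bool card_ord => h.
by have := ltn_trans (leq_trans (ltn_expl i (ltnSn 1)) h) hi; rewrite ltnn.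
Qed.

End Base.

Import GRing.Theory.
Local Open Scope ring_scope.

Section Poly.
Variable k : nat.
Hypothesis hk : (1 < k)%N.

Lemma coef_cube_poly n j : (cube_poly n k)`_j = (cube_count n k j)%:R.
Proof.
rewrite /cube_poly coef_sum.
under eq_bigr => i _ do rewrite coefZ coefXn.
case: (ltnP j #|{: word n k}|.+1) => hj.
  rewrite (bigD1 (Ordinal hj)) //= eqxx mulr1 big1 ?addr0 // => i ne.
  rewrite (_ : (j == i) = false) ?mulr0 //; apply/negbTE; move: ne; apply: contra.
  by move=> /eqP e; apply/eqP/val_inj; rewrite /= e.
rewrite cube_countE CS_big // big1 // => i _.
rewrite (_ : (j == i) = false) ?mulr0 //; apply/negbTE/eqP => e.
by move: (ltn_ord i); rewrite -e ltnNge hj.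
Qed.

Lemma coef_lin (c d : nat) (p : {poly int}) j :
  ((c%:R + d%:R *: 'X) * p)`_j = p`_j *+ c + d%:R * (if j == 0%N then 0 else p`_j.-1).
Proof.
by rewrite mulrDl coefD mulr_natl coefMn -scalerAl coefZ coefXM.
Qed.

Lemma P0 : cube_poly 0 k = 1.
Proof.
apply/polyP => j; rewrite coef_cube_poly coefC cube_countE.
by case: j => [|j]; rewrite ?CS00 ?CS0S.
Qed.

Lemma P1 : cube_poly 1 k = k%:R + (k.-1)%:R *: 'X.
Proof.
apply/polyP => j; rewrite coef_cube_poly cube_countE rec // coefD -polyC_natr coefC coefZ coefX.
case: j => [|[|j]] /=; rewrite ?CS00 ?CS0S ?muln0 ?muln1 ?addn0 ?mulr0 ?mulr1 ?addr0 ?add0r //.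
Qed.

Lemma P_rec n : cube_poly n.+2 k =
  (k%:R + (k.-1)%:R *: 'X) * cube_poly n.+1 k + (1 + 'X) * cube_poly n k.
Proof.
apply/polyP => j.
rewrite (_ : 1 + 'X = 1%:R + 1%:R *: 'X :> {poly int}); last by rewrite scale1r.
rewrite coefD coef_lin coef_lin !coef_cube_poly !cube_countE rec //.
case: j => [|j] /=; rewrite ?mulr0 ?addr0 ?mulr1n ?mul1r; rewrite ?natrD ?natrM ?mulr_natl ?addr0 //.
by rewrite -!addrA; congr (_ + _); rewrite addrCA.
Qed.

End Poly.

Theorem proposition5p2 (k : nat) : (2 <= k)%N ->
  forall m : nat,
    \sum_(i < m.+1) cube_poly i k * pell_denom k (m - i) = (m == 0%N)%:R.
Proof.
move=> hk [|[|m]].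
- by rewrite big_ord1 P0 // /pell_denom /= mul1r.
- rewrite big_ord_recr big_ord1 /= P0 // P1 // /pell_denom /= mul1r mulr1.
  by rewrite addNr.
- rewrite !big_ord_recr /= big1; last first.
    move=> i _; rewrite /pell_denom.
    have h : (3 <= m.+2 - i)%N by move: (ltn_ord i); lia.
    rewrite (_ : (m.+2 - i == 0)%N = false); last by apply/eqP; lia.
    rewrite (_ : (m.+2 - i == 1)%N = false); last by apply/eqP; lia.
    rewrite (_ : (m.+2 - i == 2)%N = false); last by apply/eqP; lia.
    by rewrite mulr0.
  rewrite (_ : (m.+2 - m = 2)%N); last by lia.
  rewrite (_ : (m.+2 - m.+1 = 1)%N); last by lia.
  rewrite subnn /pell_denom /= P_rec //.
  ring.
Qed.
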